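(* Consider a clustered gossip network with $m$ clusters of $k$ end-nodes each, as described in the context. Let $F_c$ denote the average binary freshness $\lim_{t\to\infty}\mathbb{E}[F_c(t)]$ of a cluster head, and for a nonempty subset $S$ of the end-nodes of a single cluster let $F_S=\lim_{t\to\infty}\mathbb{E}[\max_{j\in S}F_j(t)]$. Then $$F_S=\frac{\lambda_c(S)F_c+\sum_{i\in N(S)}\lambda_i(S)F_{S\cup\{i\}}}{\lambda_e+\lambda_c(S)+\sum_{i\in N(S)}\lambda_i(S)},\qquad F_c=\frac{\lambda_s}{\lambda_s+m\lambda_e}.$$
   Context: Model: The information at a source is updated (a new version is generated) according to a Poisson process of rate $\lambda_e>0$. There are $n=km$ end-nodes partitioned into $m$ clusters of $k$ nodes each, and each cluster has a cluster head. The source sends its current version to each cluster head according to a Poisson process of rate $\lambda_s/m$; each cluster head sends its stored version to each of the $k$ end-nodes of its own cluster according to a Poisson process of rate $\lambda_c/k$; an end-node $i$ sends its stored version to an end-node $j\ne i$ of the same cluster according to a Poisson process of rate $\lambda_{ij}\ge0$ (there is no gossip between different clusters, and cluster heads receive only from the source). All processes are independent. A node receiving a version keeps the fresher of its stored and received versions. The binary freshness $F_x(t)$ of a node (end-node or cluster head) $x$ is $1$ if it stores the current source version at time $t$ and $0$ otherwise. Notation for a subset $S$ of end-nodes of one cluster: $\lambda_c(S)$ is the total update rate from that cluster's head into $S$ (equal to $|S|\lambda_c/k$); for an end-node $i\notin S$, $\lambda_i(S)=\sum_{j\in S}\lambda_{ij}$; $N(S)=\{i\notin S:\lambda_i(S)>0\}$.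 *)

(* Defs.v *)
From HB Require Import structures.
From mathcomp Require Import all_boot all_order all_algebra.
From mathcomp Require Import all_classical all_reals all_analysis.
Set Implicit Arguments. Unset Strict Implicit. Unset Printing Implicit Defensive.
Import Order.TTheory GRing.Theory Num.Theory.
Import numFieldNormedType.Exports.
Local Open Scope ring_scope.

(* Nodes of the clustered network: cluster heads [inl h] (h : 'I_m) and
   end-nodes [inr (h, j)] = end-node j of cluster h. *)
Definition node (m k : nat) := ('I_m + 'I_m * 'I_k)%type.

(* A state of the binary-freshness Markov chain: the freshness bit of every
   cluster head and every end-node. *)
Definition state (m k : nat) := {ffun node m k -> bool}.

Definition upd m k (x : state m k) (a : node m k) (b : bool) : state m k :=
  [ffun z => if z == a then b else x z].

(* source generates a new version: nobody is fresh any more *)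
Definition ev_reset m k (x : state m k) : state m k := [ffun _ => false].
Definition ev_src m k (h : 'I_m) (x : state m k) : state m k :=
  upd x (inl h) true.
(* cluster head h sends to its end-node j: j keeps the fresher version *)
Definition ev_head m k (h : 'I_m) (j : 'I_k) (x : state m k) : state m k :=
  upd x (inr (h, j)) (x (inr (h, j)) || x (inl h)).
Definition ev_gossip m k (h : 'I_m) (i j : 'I_k) (x : state m k) : state m k :=
  upd x (inr (h, j)) (x (inr (h, j)) || x (inr (h, i))).

(* net probability flow into y caused by a transition map f (per unit rate) *)
Definition flow (R : realType) m k (f : state m k -> state m k)
    (p : state m k -> R) (y : state m k) : R :=
  (\sum_(x | f x == y) p x) - p y.

(* Right-hand side of the Kolmogorov forward equation p' = p Q of the
   continuous-time Markov chain of freshness bits. *)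
Definition generator (R : realType) (m k : nat) (le ls lc : R)
    (lam : 'I_m -> 'I_k -> 'I_k -> R) (p : state m k -> R) (y : state m k) : R :=
  le * flow (@ev_reset m k) p y
  + \sum_(h < m) (ls / m%:R) * flow (ev_src h) p y
  + \sum_(h < m) \sum_(j < k) (lc / k%:R) * flow (ev_head h j) p y
  + \sum_(h < m) \sum_(i < k) \sum_(j < k | j != i)
        lam h i j * flow (ev_gossip h i j) p y.

Definition E_head (R : realType) m k (p : R -> state m k -> R) (h : 'I_m) (t : R) : R :=
  \sum_(x : state m k) p t x * (x (inl h))%:R.

Definition E_max (R : realType) m k (p : R -> state m k -> R) (h : 'I_m)
    (S : {set 'I_k}) (t : R) : R :=
  \sum_(x : state m k) p t x *
     (\big[maxn/0%N]_(j in S) nat_of_bool (x (inr (h, j))))%:R.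

Definition lamc_set (R : realType) k (lc : R) (S : {set 'I_k}) : R :=
  #|S|%:R * (lc / k%:R).
Definition lam_to_set (R : realType) m k (lam : 'I_m -> 'I_k -> 'I_k -> R)
    (h : 'I_m) (i : 'I_k) (S : {set 'I_k}) : R :=
  \sum_(j in S) lam h i j.
Definition Nset (R : realType) m k (lam : 'I_m -> 'I_k -> 'I_k -> R)
    (h : 'I_m) (S : {set 'I_k}) : {set 'I_k} :=
  [set i | (i \notin S) && (0 < lam_to_set lam h i S)].

(* Main.v *)
Require Import Defs.
From HB Require Import structures.
From mathcomp Require Import all_boot all_order all_algebra.
From mathcomp Require Import all_classical all_reals all_analysis.
From mathcomp Require Import ring lra.
Import Order.TTheory GRing.Theory Num.Theory.
Import numFieldNormedType.Exports.
Local Open Scope classical_set_scope.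
Local Open Scope ring_scope.
Set Implicit Arguments. Unset Strict Implicit.

From mathcomp Require Import zify.
Lemma ideq (R : realType) (f : R -> R) (x df df' : R) :
  is_derive x (1:R) f df -> df = df' -> is_derive x (1:R) f df'.
Proof. by move=> H <-. Qed.

Lemma is_derive_lin (R : realType) (c s : R) : is_derive s (1:R) (fun s : R => c * s) c.
Proof.
have H := @is_deriveM R _ (cst c) id s 1 0 1 (is_derive_cst _ _ _) (is_derive_id _ _).
have H2 : is_derive s (1:R) (fun s : R => c * s) (c *: 1 + s *: 0) := H.
apply: (ideq H2).
by rewrite scaler0 addr0 /GRing.scale /= mulr1.
Qed.

Lemma is_derive_mul (R : realType) (f g : R -> R) (s df dg : R) :
  is_derive s (1:R) f df -> is_derive s (1:R) g dg ->
  is_derive s (1:R) (fun x => f x * g x) (f s * dg + g s * df).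
Proof.
move=> Hf Hg.
have H := @is_deriveM R _ f g s 1 df dg Hf Hg.
exact: H.
Qed.

Lemma is_derive_sub (R : realType) (f : R -> R) (s df K : R) :
  is_derive s (1:R) f df -> is_derive s (1:R) (fun x => f x - K) df.
Proof.
move=> Hf.
have H := @is_deriveB R _ _ f (cst K) s 1 df 0 Hf (is_derive_cst _ _ _).
have H2 : is_derive s (1:R) (fun x => f x - K) (df - 0) := H.
by rewrite subr0 in H2.
Qed.

Lemma ode_cmp (R : realType) (z g : R -> R) (c K a : R) : 0 < c ->
  (forall t : R, is_derive t (1:R) z (- c * z t + g t)) -> (forall t, a <= t -> g t <= K) ->
  forall t, a <= t -> z t - K / c <= expR (c * a - c * t) * (z a - K / c).
Proof.
move=> c0 dz gK t; rewrite le_eqVlt => /orP[/eqP<-|alt].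
  by rewrite subrr expR0 mul1r.
pose u := fun s => expR (c * s) * (z s - K / c).
have du : forall s : R, is_derive s (1:R) u (expR (c * s) * (g s - K)).
  move=> s.
  have e1 : is_derive s (1:R) (fun s => expR (c * s)) (expR (c * s) * c).
    exact: (@is_derive1_comp R expR (fun s => c * s) s _ _ (is_derive_expR _) (is_derive_lin c s)).
  have e2 := is_derive_sub (K / c) (dz s).
  apply: (ideq (is_derive_mul e1 e2)).
  have cn : c != 0 by rewrite gt_eqF.
  field; exact: cn.
have [xi xiin Hxi] := @MVT R u _ a t alt (fun x _ => du x)
  (@derivable_within_continuous R _ u `[a, t]%R (fun x _ => @ex_derive _ _ _ x 1 u _ (du x))).
have Hle : u t <= u a.
  rewrite -subr_le0 Hxi; apply: mulr_le0_ge0; last by rewrite subr_ge0 ltW.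
  apply: mulr_ge0_le0; first exact: ltW (expR_gt0 _).
  rewrite subr_le0; apply: gK.
  by move: xiin; rewrite in_itv /= => /andP[/ltW].
rewrite -(ler_pM2l (expR_gt0 (c * t))).
have -> : expR (c * t) * (expR (c * a - c * t) * (z a - K / c)) = u a.
  have en := gt_eqF (expR_gt0 (c * t)).
  rewrite /u expRD expRN; field.
  by rewrite en gt_eqF.
exact Hle.
Qed.

Lemma is_derive_opp (R : realType) (f : R -> R) (s df : R) :
  is_derive s (1:R) f df -> is_derive s (1:R) (fun x => - f x) (- df).
Proof.
move=> Hf.
have H := @is_deriveN R _ _ f s 1 df Hf.
exact: H.
Qed.

Lemma ode_lim (R : realType) (y f : R -> R) (c L : R) : 0 < c ->
  (forall t : R, is_derive t (1:R) y (- c * y t + f t)) ->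
  f t @[t --> +oo] --> L -> y t @[t --> +oo] --> L / c.
Proof.
move=> c0 dy Hf; apply/cvgrPdist_le => eps eps0.
pose e := eps * c / (1 + c).
have e0 : 0 < e by rewrite /e divr_gt0 ?mulr_gt0 ?addr_gt0.
move/cvgrPdist_le: Hf => /(_ e e0) [M [Mreal HM]].
pose a := M + 1.
have fb : forall t, a <= t -> `|L - f t| <= e.
  move=> t hat; apply: HM; rewrite /a in hat; lra.
have up := @ode_cmp R y f c (L + e) a c0 dy
  (fun t ta => ltac:(have := fb t ta; rewrite ler_norml; lra)).
have dny : forall t : R, is_derive t (1:R) (fun x => - y x) (- c * (- y t) + (- f t)).
  move=> t; apply: (ideq (is_derive_opp (dy t))); lra.
have lo := @ode_cmp R (fun x => - y x) (fun x => - f x) c (- (L - e)) a c0 dny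
  (fun t ta => ltac:(have := fb t ta; rewrite ler_norml; lra)).
pose Mx := `|y a - L / c| + e / c.
have Mx0 : 0 <= Mx by rewrite /Mx addr_ge0 // divr_ge0 // ltW.
exists (a + Mx / (c * e)); split; first exact: num_real.
move=> t /= tlt.
have hat : a <= t.
  have : 0 <= Mx / (c * e) by rewrite divr_ge0 // ltW // mulr_gt0.
  lra.
have := up t hat; have := lo t hat => /= lo' up'.
pose x := c * t - c * a.
have Ex : expR (c * a - c * t) = expR (- x) by rewrite /x opprB.
rewrite Ex in lo' up'.
have E1 : expR (- x) * expR x = 1 by rewrite expRN mulVf // gt_eqF // expR_gt0.
have E2 : 1 + x <= expR x := expR_ge1Dx x.
have E3 : 0 < expR (- x) := expR_gt0 _.
have xM : Mx <= x * e.
  have ce : 0 < c * e by rewrite mulr_gt0.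
  have q : Mx / (c * e) <= t - a by lra.
  have := ler_wpM2r (ltW ce) q; rewrite divfK ?gt_eqF // => h.
  have -> : x * e = (t - a) * (c * e) by rewrite /x; ring.
  exact: h.
have EM : expR (- x) * Mx <= e.
  have : expR (- x) * Mx <= expR (- x) * (x * e) by rewrite ler_pM2l.
  have : expR (- x) * (x * e) <= expR (- x) * (expR x * e).
    rewrite ler_pM2l // ler_pM2r //; lra.
  have E4 : expR (- x) * (expR x * e) = e by rewrite mulrA E1 mul1r.
  lra.
have n1 : y a - L / c <= `|y a - L / c| := ler_norm _.
have n2 : - (y a - L / c) <= `|y a - L / c| by rewrite -normrN ler_norm.
have ec : (L + e) / c = L / c + e / c by rewrite mulrDl.
have ec' : (- (L - e)) / c = - (L / c) + e / c by rewrite opprB mulrDl mulNr addrC.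
rewrite ec in up'; rewrite ec' in lo'.
have ec0 : 0 <= e / c by rewrite divr_ge0 // ltW.
have H1 : expR (- x) * (y a - (L / c + e / c)) <= expR (- x) * Mx.
  rewrite ler_pM2l //; rewrite /Mx; lra.
have H2 : expR (- x) * (- y a - (- (L / c) + e / c)) <= expR (- x) * Mx.
  rewrite ler_pM2l //; rewrite /Mx; lra.
have fin : e / c + e = eps.
  rewrite /e; field; rewrite gt_eqF ?addr_gt0 //=.
  by rewrite gt_eqF.
rewrite ler_norml; lra.
Qed.

Lemma deriv0_const (R : realType) (M : R -> R) :
  (forall t : R, is_derive t (1:R) M 0) -> forall t, M t = M 0.
Proof.
move=> dM t.
have cont : forall a b : R, {within `[a, b], continuous M}.
  move=> a b; exact: (@derivable_within_continuous R _ M `[a, b]%R (fun x _ => @ex_derive _ _ _ x 1 M _ (dM x))).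
case: (ltgtP t 0) => [tl|tg|->] //.
  have [xi _ H] := @MVT R M (fun _ => 0) t 0 tl (fun x _ => dM x) (cont t 0).
  by apply/eqP; rewrite eq_sym -subr_eq0 H mul0r.
have [xi _ H] := @MVT R M (fun _ => 0) 0 t tg (fun x _ => dM x) (cont 0 t).
by apply/eqP; rewrite -subr_eq0 H mul0r.
Qed.

Lemma cvg_addf (R : realType) (f g : R -> R) (a b : R) :
  f t @[t --> +oo] --> a -> g t @[t --> +oo] --> b ->
  (f t + g t) @[t --> +oo] --> a + b.
Proof. move=> Hf Hg; exact: cvgD. Qed.

Lemma cvg_scalef (R : realType) (f : R -> R) (c a : R) :
  f t @[t --> +oo] --> a -> (c * f t) @[t --> +oo] --> c * a.
Proof. move=> Hf; apply: cvgM => //; exact: cvg_cst. Qed.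

Lemma cvg_bigsum_seq (R : realType) (I : eqType) (r : seq I) (P : pred I) (F : I -> R -> R) (l : I -> R) :
  (forall i, P i -> F i t @[t --> +oo] --> l i) ->
  (\sum_(i <- r | P i) F i t) @[t --> +oo] --> \sum_(i <- r | P i) l i.
Proof.
move=> HF; elim: r => [|a r IH].
  have -> : (fun t => \sum_(i <- [::] | P i) F i t) = (fun _ => 0).
    by apply/funext => t; rewrite big_nil.
  rewrite big_nil; exact: cvg_cst.
have -> : (fun t => \sum_(i <- a :: r | P i) F i t)
   = (fun t => (if P a then F a t else 0) + \sum_(i <- r | P i) F i t).
  by apply/funext => t; rewrite big_cons; case: (P a); rewrite ?add0r.
rewrite big_cons; case Pa: (P a).
  exact: cvg_addf (HF a Pa) IH.
rewrite -[X in _ --> X]add0r; apply: cvg_addf IH; exact: cvg_cst.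
Qed.

Lemma cvg_bigsum (R : realType) (I : finType) (P : pred I) (F : I -> R -> R) (l : I -> R) :
  (forall i, P i -> F i t @[t --> +oo] --> l i) ->
  (\sum_(i | P i) F i t) @[t --> +oo] --> \sum_(i | P i) l i.
Proof. move=> HF; exact: cvg_bigsum_seq. Qed.

Lemma set_ind (k : nat) (P : {set 'I_k} -> Prop) :
  (forall S : {set 'I_k}, (forall i : 'I_k, i \notin S -> P (i |: S)) -> P S) -> forall S, P S.
Proof.
move=> IH S.
have : (k - #|S| <= k - #|S|)%N by [].
move: {2}(k - #|S|)%N => n; elim: n S => [|n IHn] S hS; apply: (IH) => i iS.
  have c1 := cardsU1 i S; rewrite iS /= in c1.
  have c2 := max_card (i |: S); rewrite card_ord c1 in c2.
  exfalso; move: hS c2; set s := #|S| => hS c2; lia.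
apply: IHn.
have c1 := cardsU1 i S; rewrite iS /= in c1.
rewrite c1; move: hS; set s := #|S| => hS; lia.
Qed.

Lemma pos3 (R : realType) (a b c : R) : 0 < a -> 0 <= b -> 0 <= c -> 0 < a + b + c.
Proof. move=> *; lra. Qed.
Lemma pos2 (R : realType) (a b : R) : 0 < a -> 0 <= b -> 0 < a + b.
Proof. move=> *; lra. Qed.

Lemma is_derive_add (R : realType) (f g : R -> R) (s df dg : R) :
  is_derive s (1:R) f df -> is_derive s (1:R) g dg ->
  is_derive s (1:R) (fun x => f x + g x) (df + dg).
Proof.
move=> Hf Hg.
have H := @is_deriveD R _ _ f g s 1 df dg Hf Hg.
exact: H.
Qed.

Lemma is_derive_mulc (R : realType) (f : R -> R) (s df c : R) :
  is_derive s (1:R) f df -> is_derive s (1:R) (fun x => f x * c) (df * c).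
Proof.
move=> Hf.
have H := @is_deriveM R _ f (cst c) s 1 df 0 Hf (is_derive_cst _ _ _).
have H2 : is_derive s (1:R) (fun x => f x * c) (f s *: 0 + c *: df) := H.
by rewrite scaler0 add0r /GRing.scale /= mulrC in H2.
Qed.

Section Markov.
Variables (R : realType) (m k : nat) (le ls lc : R) (lam : 'I_m -> 'I_k -> 'I_k -> R).
Local Notation st := (state m k).

Definition Lgen (f : st -> R) (x : st) : R :=
  le * (f (ev_reset x) - f x)
  + \sum_(h < m) (ls / m%:R) * (f (ev_src h x) - f x)
  + \sum_(h < m) \sum_(j < k) (lc / k%:R) * (f (ev_head h j x) - f x)
  + \sum_(h < m) \sum_(i < k) \sum_(j < k | j != i)
        lam h i j * (f (ev_gossip h i j x) - f x).

Lemma flow_sum (F : st -> st) (q f : st -> R) :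
  \sum_y flow F q y * f y = \sum_x q x * (f (F x) - f x).
Proof.
rewrite /flow.
under eq_bigr do rewrite mulrBl.
rewrite sumrB.
under [RHS]eq_bigr do rewrite mulrBr.
rewrite sumrB; congr (_ - _).
under eq_bigr do rewrite big_distrl /=.
rewrite (exchange_big_dep xpredT) //=.
apply: eq_bigr => x _.
by rewrite (big_pred1 (F x)) // => y; rewrite /= eq_sym.
Qed.

Lemma sumL (I : finType) (P : pred I) (G : I -> st -> R) (f : st -> R) :
  \sum_y (\sum_(i | P i) G i y) * f y = \sum_(i | P i) \sum_y G i y * f y.
Proof. under eq_bigr do rewrite big_distrl. exact: exchange_big. Qed.

Lemma sumR (I : finType) (P : pred I) (H : I -> st -> R) (q : st -> R) :
  \sum_x q x * (\sum_(i | P i) H i x) = \sum_(i | P i) \sum_x q x * H i x.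
Proof. under eq_bigr do rewrite big_distrr. exact: exchange_big. Qed.

Lemma flow_sumZ a F (q f : st -> R) :
  \sum_y (a * flow F q y) * f y = \sum_x q x * (a * (f (F x) - f x)).
Proof.
under eq_bigr do rewrite -mulrA.
rewrite -big_distrr flow_sum big_distrr.
by apply: eq_bigr => x _; rewrite mulrCA.
Qed.

Lemma gen_sum (q f : st -> R) :
  \sum_y generator le ls lc lam q y * f y = \sum_x q x * Lgen f x.
Proof.
rewrite /generator /Lgen.
under eq_bigr do rewrite !mulrDl.
under [RHS]eq_bigr do (do 3 rewrite mulrDr).
rewrite !big_split /=.
congr (_ + _ + _ + _).
- exact: flow_sumZ.
- rewrite sumL sumR; apply: eq_bigr => h _; exact: flow_sumZ.
- rewrite sumL sumR; apply: eq_bigr => h _.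
  rewrite sumL sumR; apply: eq_bigr => j _; exact: flow_sumZ.
- rewrite sumL sumR; apply: eq_bigr => h _.
  rewrite sumL sumR; apply: eq_bigr => i _.
  rewrite sumL sumR; apply: eq_bigr => j _; exact: flow_sumZ.
Qed.

Lemma E_derive_seq (q : R -> st -> R) (D : st -> R) (f : st -> R) t (r : seq st) :
  (forall y, is_derive t (1:R) (fun s => q s y) (D y)) ->
  is_derive t (1:R) (fun s => \sum_(x <- r) q s x * f x) (\sum_(x <- r) D x * f x).
Proof.
move=> dq; elim: r => [|a r IH].
  have -> : (fun s => \sum_(x <- [::]) q s x * f x) = (fun _ => 0).
    by apply/funext => s; rewrite big_nil.
  rewrite big_nil; exact: (is_derive_cst (0:R) t 1).
have -> : (fun s => \sum_(x <- a :: r) q s x * f x)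
    = (fun s => q s a * f a + \sum_(x <- r) q s x * f x).
  by apply/funext => s; rewrite big_cons.
rewrite big_cons; apply: is_derive_add => //.
exact: is_derive_mulc.
Qed.

Lemma E_derive (q : R -> st -> R) (D : st -> R) (f : st -> R) t :
  (forall y, is_derive t (1:R) (fun s => q s y) (D y)) ->
  is_derive t (1:R) (fun s => \sum_x q s x * f x) (\sum_x D x * f x).
Proof. move=> dq; exact: (E_derive_seq f (index_enum _) dq). Qed.

Lemma Lgen_cst x : Lgen (fun _ => 1) x = 0.
Proof.
rewrite /Lgen !subrr !mulr0.
have z : \sum_(h < m) \sum_(i < k) \sum_(j < k | j != i) lam h i j * (0:R) = 0.
  by apply: big1 => h _; apply: big1 => i _; apply: big1 => j _; rewrite mulr0.
by rewrite z !big1_eq !addr0.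
Qed.


Variable h : 'I_m.
Definition b2r (b : bool) : R := (b : nat)%:R.
Definition gb (S : {set 'I_k}) (x : st) : bool := [exists j in S, x (inr (h, j))].
Definition Phi (phi : bool -> bool -> R) S (x : st) : R := phi (x (inl h)) (gb S x).

Lemma ex_upd (S : {set 'I_k}) (b : 'I_k -> bool) j c :
  [exists j' in S, if j' == j then b j || c else b j'] = [exists j' in S, b j'] || ((j \in S) && c).
Proof.
apply/idP/idP.
- move=> /existsP[j' /andP[]]; case: (eqVneq j' j) => [-> | _] jS.
    case/orP => [bj|cc]; first by apply/orP; left; apply/existsP; exists j; rewrite jS bj.
    by apply/orP; right; rewrite jS cc.
  by move=> bj; apply/orP; left; apply/existsP; exists j'; rewrite jS bj.
- case/orP => [/existsP[j' /andP[j'S bj']] | /andP[jS cc]].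
    apply/existsP; exists j'; rewrite j'S /=; case: (eqVneq j' j) => [e|_] //.
    by move: bj'; rewrite e => ->.
  by apply/existsP; exists j; rewrite jS eqxx cc orbT.
Qed.

Lemma eq_inl (A B : eqType) (a b : A) : (inl a == inl b :> A + B) = (a == b).
Proof. by apply/eqP/eqP => [[]|->]. Qed.
Lemma eq_inr (A B : eqType) (a b : B) : (inr a == inr b :> A + B) = (a == b).
Proof. by apply/eqP/eqP => [[]|->]. Qed.
Lemma eq_inlr (A B : eqType) (a : A) (b : B) : (inl a == inr b :> A + B) = false.
Proof. by apply/eqP. Qed.
Lemma eq_inrl (A B : eqType) (a : A) (b : B) : (inr b == inl a :> A + B) = false.
Proof. by apply/eqP. Qed.

Lemma hd_src h' (x : st) : ev_src h' x (inl h) = (h' == h) || x (inl h).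
Proof. by rewrite /ev_src /upd ffunE eq_inl eq_sym; case: (h' == h). Qed.

Lemma gb_src S h' (x : st) : gb S (ev_src h' x) = gb S x.
Proof. apply: eq_existsb => j; by rewrite ffunE. Qed.

Lemma hd_head h' j (x : st) : ev_head h' j x (inl h) = x (inl h).
Proof. by rewrite ffunE. Qed.

Lemma gb_head S h' j (x : st) : gb S (ev_head h' j x) = gb S x || ((h' == h) && (j \in S) && x (inl h)).
Proof.
rewrite /gb; case: (eqVneq h' h) => [->|ne] /=.
  rewrite -(ex_upd S (fun j => x (inr (h, j)))); apply: eq_existsb => j'.
  by rewrite ffunE eq_inr xpair_eqE eqxx.
have ne2 : (h == h') = false by rewrite eq_sym (negbTE ne).
rewrite orbF; apply: eq_existsb => j'; by rewrite ffunE eq_inr xpair_eqE ne2.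
Qed.

Lemma gb_gossip S h' i j (x : st) :
  gb S (ev_gossip h' i j x) = gb S x || ((h' == h) && (j \in S) && x (inr (h, i))).
Proof.
rewrite /gb; case: (eqVneq h' h) => [->|ne] /=.
  rewrite -(ex_upd S (fun j => x (inr (h, j)))); apply: eq_existsb => j'.
  by rewrite ffunE eq_inr xpair_eqE eqxx.
have ne2 : (h == h') = false by rewrite eq_sym (negbTE ne).
rewrite orbF; apply: eq_existsb => j'; by rewrite ffunE eq_inr xpair_eqE ne2.
Qed.

Lemma hd_gossip h' i j (x : st) : ev_gossip h' i j x (inl h) = x (inl h).
Proof. by rewrite ffunE. Qed.

Lemma hd_reset (x : st) : ev_reset x (inl h) = false.
Proof. by rewrite ffunE. Qed.

Lemma gb_reset S (x : st) : gb S (ev_reset x) = false.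
Proof. by apply/existsP => -[j]; rewrite ffunE andbF. Qed.

Lemma gb_setU1 i S (x : st) : gb (i |: S) x = x (inr (h, i)) || gb S x.
Proof.
apply/idP/idP.
- move=> /existsP[j /andP[]]; rewrite in_setU1 => /orP[/eqP->|jS] xj; first by rewrite xj.
  by apply/orP; right; apply/existsP; exists j; rewrite jS xj.
- case/orP => [xi|/existsP[j /andP[jS xj]]]; apply/existsP.
    by exists i; rewrite setU11 xi.
  by exists j; rewrite in_setU1 jS orbT xj.
Qed.

Lemma Lgen_Phi phi S (x : st) : Lgen (Phi phi S) x =
  le * (phi false false - Phi phi S x)
  + (ls / m%:R) * (phi true (gb S x) - Phi phi S x)
  + lamc_set lc S * (phi (x (inl h)) (gb S x || x (inl h)) - Phi phi S x)
  + \sum_(i | i \notin S) lam_to_set lam h i S * (Phi phi (i |: S) x - Phi phi S x).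
Proof.
rewrite /Lgen; congr (_ + _ + _ + _).
- by rewrite /Phi hd_reset gb_reset.
- rewrite (bigD1 h) //= big1 ?addr0.
    by rewrite /Phi hd_src gb_src eqxx.
  by move=> h' ne; rewrite /Phi hd_src gb_src (negbTE ne) /= subrr mulr0.
- rewrite (bigD1 h) //= [X in _ + X]big1 ?addr0; last first.
    move=> h' ne; apply: big1 => j _.
    by rewrite /Phi hd_head gb_head (negbTE ne) /= orbF subrr mulr0.
  rewrite (eq_bigr (fun j => if j \in S then lc / k%:R * (phi (x (inl h)) (gb S x || x (inl h)) - Phi phi S x) else 0)); last first.
    move=> j _; rewrite /Phi hd_head gb_head eqxx /=.
    by case: (j \in S) => //=; rewrite orbF subrr mulr0.
  by rewrite -big_mkcond /= sumr_const /lamc_set -[RHS]mulrA [RHS]mulr_natl.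
- rewrite (bigD1 h) //= [X in _ + X]big1 ?addr0; last first.
    move=> h' ne; apply: big1 => i _; apply: big1 => j _.
    by rewrite /Phi hd_gossip gb_gossip (negbTE ne) /= orbF subrr mulr0.
  rewrite [RHS]big_mkcond /=; apply: eq_bigr => i _.
  case: (boolP (i \in S)) => iS /=.
    apply: big1 => j _; rewrite /Phi hd_gossip gb_gossip eqxx /=.
    have -> : gb S x || ((j \in S) && x (inr (h, i))) = gb S x.
      case xi: (x (inr (h, i))); last by rewrite andbF orbF.
      have -> : gb S x = true by apply/existsP; exists i; rewrite iS xi.
      by [].
    by rewrite subrr mulr0.
  rewrite (eq_bigr (fun j => if j \in S then lam h i j * (Phi phi (i |: S) x - Phi phi S x) else 0)); last first.
    move=> j _; rewrite /Phi hd_gossip gb_gossip gb_setU1 eqxx /=.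
    by case: (j \in S) => /=; [rewrite orbC | rewrite orbF subrr mulr0].
  rewrite -big_mkcondr /= /lam_to_set big_distrl /=.
  apply: eq_bigl => j; case: (boolP (j \in S)) => jS; rewrite ?andbF ?andbT //.
  by apply/negP => /eqP e; move: iS; rewrite -e jS.
Qed.

Definition phd (a b : bool) : R := b2r a.
Definition pg (a b : bool) : R := b2r b.
Definition pw (a b : bool) : R := b2r (~~ a && b).
Definition lS (S : {set 'I_k}) : R := \sum_(i | i \notin S) lam_to_set lam h i S.

Lemma b2r0 : b2r false = 0. Proof. by []. Qed.
Lemma b2r1 : b2r true = 1. Proof. by []. Qed.

Lemma Lgen_hd S (x : st) : Lgen (Phi phd S) x = - (le + ls / m%:R) * Phi phd S x + ls / m%:R.
Proof.
rewrite Lgen_Phi /Phi /phd !subrr big1; last by move=> i _; rewrite mulr0.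
rewrite b2r0 b2r1; ring.
Qed.

Lemma Lgen_g S (x : st) : Lgen (Phi pg S) x =
  - (le + lamc_set lc S + lS S) * Phi pg S x
  + (lamc_set lc S * (Phi phd S x + Phi pw S x)
     + \sum_(i | i \notin S) lam_to_set lam h i S * Phi pg (i |: S) x).
Proof.
rewrite Lgen_Phi /Phi /pg /phd /pw.
have e : b2r (gb S x || x (inl h)) = b2r (x (inl h)) + b2r (~~ x (inl h) && gb S x).
  by case: (x (inl h)); case: (gb S x); rewrite /= ?b2r0 ?b2r1 ?addr0 ?add0r.
rewrite e; under eq_bigr do rewrite mulrBr.
rewrite sumrB /lS -big_distrl /= b2r0 subrr mulr0; ring.
Qed.

Lemma Lgen_w S (x : st) : Lgen (Phi pw S) x =
  - (le + ls / m%:R + lS S) * Phi pw S x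
  + \sum_(i | i \notin S) lam_to_set lam h i S * Phi pw (i |: S) x.
Proof.
rewrite Lgen_Phi /Phi /pw /=.
have e : ~~ x (inl h) && (gb S x || x (inl h)) = ~~ x (inl h) && gb S x.
  by case: (x (inl h)); rewrite ?orbT ?orbF.
rewrite e subrr mulr0 b2r0; under eq_bigr do rewrite mulrBr.
rewrite sumrB /lS -big_distrl /=; ring.
Qed.

Variable q : R -> st -> R.
Hypothesis Hq : forall (t : R) (y : st),
  is_derive t (1:R) (fun s => q s y) (generator le ls lc lam (q t) y).
Hypothesis H0 : \sum_x q 0 x = 1.

Lemma Ep_deriv (f : st -> R) t :
  is_derive t (1:R) (fun s => \sum_x q s x * f x) (\sum_x q t x * Lgen f x).
Proof. rewrite -gen_sum; exact: E_derive. Qed.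

Lemma mass t : \sum_x q t x = 1.
Proof.
have dM : forall s : R, is_derive s (1:R) (fun s => \sum_x q s x * 1) 0.
  move=> s; apply: (ideq (Ep_deriv (fun _ => 1) s)).
  by apply: big1 => x _; rewrite Lgen_cst mulr0.
have := deriv0_const dM t.
under eq_bigr do rewrite mulr1.
under [X in _ = X -> _]eq_bigr do rewrite mulr1.
by move=> ->.
Qed.

Definition EE (f : st -> R) (t : R) : R := \sum_x q t x * f x.

Lemma ode_hd S t :
  is_derive t (1:R) (EE (Phi phd S)) (- (le + ls / m%:R) * EE (Phi phd S) t + ls / m%:R).
Proof.
apply: (ideq (Ep_deriv _ t)).
under eq_bigr do rewrite Lgen_hd mulrDr mulrCA.
rewrite big_split /= -big_distrr -big_distrl /= mass mul1r.
by [].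
Qed.

Lemma ode_w S t :
  is_derive t (1:R) (EE (Phi pw S))
    (- (le + ls / m%:R + lS S) * EE (Phi pw S) t
     + \sum_(i | i \notin S) lam_to_set lam h i S * EE (Phi pw (i |: S)) t).
Proof.
apply: (ideq (Ep_deriv _ t)).
under eq_bigr do rewrite Lgen_w mulrDr mulrCA.
rewrite big_split /= -big_distrr /=; congr (_ + _).
rewrite sumR; apply: eq_bigr => i _.
under eq_bigr do rewrite mulrCA.
by rewrite -big_distrr.
Qed.

Lemma ode_g S t :
  is_derive t (1:R) (EE (Phi pg S))
    (- (le + lamc_set lc S + lS S) * EE (Phi pg S) t
     + (lamc_set lc S * (EE (Phi phd S) t + EE (Phi pw S) t)
        + \sum_(i | i \notin S) lam_to_set lam h i S * EE (Phi pg (i |: S)) t)).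
Proof.
apply: (ideq (Ep_deriv _ t)).
under eq_bigr do rewrite Lgen_g mulrDr [X in _ + X]mulrDr mulrCA [X in _ + (X + _)]mulrCA.
rewrite !big_split /= -!big_distrr /=; congr (_ + (_ + _)).
  congr (_ * _); rewrite /EE -big_split /=; apply: eq_bigr => x _; by rewrite mulrDr.
rewrite sumR; apply: eq_bigr => i _.
under eq_bigr do rewrite mulrCA.
by rewrite -big_distrr.
Qed.

Hypothesis Hle : 0 < le.
Hypothesis Hls : 0 <= ls.
Hypothesis Hlc : 0 <= lc.
Hypothesis Hlam : forall h i j, 0 <= lam h i j.

Lemma lamc_ge0 (S : {set 'I_k}) : 0 <= lamc_set lc S.
Proof. by rewrite /lamc_set mulr_ge0 // divr_ge0. Qed.

Lemma lam_to_set_ge0 i (S : {set 'I_k}) : 0 <= lam_to_set lam h i S.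
Proof. by apply: sumr_ge0 => j _; exact: Hlam. Qed.

Lemma lS_ge0 (S : {set 'I_k}) : 0 <= lS S.
Proof. by apply: sumr_ge0 => i _; exact: lam_to_set_ge0. Qed.

Lemma m_gt0 : (0 < m)%N.
Proof. exact: leq_ltn_trans (leq0n _) (ltn_ord h). Qed.

Definition astar := ls / (ls + m%:R * le).

Lemma cvg_hd (S : {set 'I_k}) : EE (Phi phd S) t @[t --> +oo] --> astar.
Proof.
have mR : (0 < m%:R :> R) by rewrite ltr0n m_gt0.
have d0 : 0 <= ls / m%:R by rewrite divr_ge0 // ltW.
have c0 : 0 < le + ls / m%:R by apply: pos2.
have H := @ode_lim R (EE (Phi phd S)) (fun _ => ls / m%:R) (le + ls / m%:R) (ls / m%:R) c0 (ode_hd S) (cvg_cst _).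
have -> : astar = ls / m%:R / (le + ls / m%:R).
  rewrite /astar; field.
  apply/andP; split; first by rewrite gt_eqF.
  rewrite gt_eqF //; apply: pos2 => //; exact: mulr_gt0.
exact: H.
Qed.

Lemma cvg_w (S : {set 'I_k}) : EE (Phi pw S) t @[t --> +oo] --> 0.
Proof.
move: S; apply: set_ind => S IH.
have mR : (0 < m%:R :> R) by rewrite ltr0n m_gt0.
have d0 : 0 <= ls / m%:R by rewrite divr_ge0 // ltW.
have l0 := lS_ge0 S.
have c0 : 0 < le + ls / m%:R + lS S by apply: pos3.
have Hf : (\sum_(i | i \notin S) lam_to_set lam h i S * EE (Phi pw (i |: S)) t) @[t --> +oo]
   --> \sum_(i | i \notin S) lam_to_set lam h i S * 0.
  apply: (@cvg_bigsum R _ _ (fun i t => lam_to_set lam h i S * EE (Phi pw (i |: S)) t)) => i iS.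
  apply: cvg_scalef; exact: IH.
rewrite big1 in Hf; last by move=> i _; rewrite mulr0.
have H := @ode_lim R (EE (Phi pw S)) _ _ 0 c0 (ode_w S) Hf.
by rewrite mul0r in H.
Qed.

Definition Lg (S : {set 'I_k}) := (lamc_set lc S * astar
   + \sum_(i | i \notin S) lam_to_set lam h i S * lim (EE (Phi pg (i |: S)) t @[t --> +oo]))
   / (le + lamc_set lc S + lS S).

Lemma cvg_g (S : {set 'I_k}) : EE (Phi pg S) t @[t --> +oo] --> Lg S.
Proof.
move: S; apply: set_ind => S IH.
have l0 := lS_ge0 S.
have l1 := lamc_ge0 S.
have c0 : 0 < le + lamc_set lc S + lS S by apply: pos3.
have Hi : forall i, i \notin S -> EE (Phi pg (i |: S)) t @[t --> +oo] --> lim (EE (Phi pg (i |: S)) t @[t --> +oo]).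
  by move=> i iS; exact: (cvgP _ (IH i iS)).
have Hf : (lamc_set lc S * (EE (Phi phd S) t + EE (Phi pw S) t)
     + \sum_(i | i \notin S) lam_to_set lam h i S * EE (Phi pg (i |: S)) t) @[t --> +oo]
   --> lamc_set lc S * (astar + 0)
     + \sum_(i | i \notin S) lam_to_set lam h i S * lim (EE (Phi pg (i |: S)) t @[t --> +oo]).
  apply: cvg_addf.
    by apply: cvg_scalef; apply: cvg_addf; [exact: cvg_hd | exact: cvg_w].
  apply: (@cvg_bigsum R _ _ (fun i t => lam_to_set lam h i S * EE (Phi pg (i |: S)) t)) => i iS.
  by apply: cvg_scalef; exact: Hi.
rewrite addr0 in Hf.
exact: (@ode_lim R (EE (Phi pg S)) _ _ _ c0 (ode_g S) Hf).
Qed.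

Lemma bigmax_ex (S : {set 'I_k}) (x : st) :
  (\big[maxn/0%N]_(j in S) nat_of_bool (x (inr (h, j)))) = nat_of_bool (gb S x).
Proof.
rewrite /gb; case: (boolP [exists j in S, x (inr (h, j))]).
  move=> /existsP[j /andP[jS xj]] /=.
  apply/eqP; rewrite eqn_leq; apply/andP; split.
    by apply/bigmax_leqP => j' _; case: (x _).
  have := @leq_bigmax_cond _ (fun j => j \in S) (fun j => nat_of_bool (x (inr (h, j)))) j jS.
  by rewrite xj.
move=> /existsPn nx /=; apply/eqP; rewrite -leqn0; apply/bigmax_leqP => j jS.
by have := nx j; rewrite jS /=; case: (x _).
Qed.

Lemma E_head_eq : E_head q h = EE (Phi phd (finset.set0 : {set 'I_k})).
Proof. by apply/funext. Qed.

Lemma E_max_eq (S : {set 'I_k}) : E_max q h S = EE (Phi pg S).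
Proof.
apply/funext => t; rewrite /E_max /EE; apply: eq_bigr => x _.
by rewrite bigmax_ex.
Qed.

Lemma sumN (S : {set 'I_k}) (F : 'I_k -> R) :
  \sum_(i in Nset lam h S) lam_to_set lam h i S * F i
  = \sum_(i | i \notin S) lam_to_set lam h i S * F i.
Proof.
rewrite big_mkcond [RHS]big_mkcond; apply: eq_bigr => i _; rewrite /Nset inE.
case: (i \in S) => //=.
case: (boolP (0 < lam_to_set lam h i S)) => [//|]; rewrite -leNgt => hle.
have -> : lam_to_set lam h i S = 0.
  by apply/eqP; rewrite eq_le hle lam_to_set_ge0.
by rewrite mul0r.
Qed.

Lemma sumN0 (S : {set 'I_k}) :
  \sum_(i in Nset lam h S) lam_to_set lam h i S = lS S.
Proof.
have := sumN S (fun _ => 1).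
under eq_bigr do rewrite mulr1.
under [X in _ = X -> _]eq_bigr do rewrite mulr1.
by [].
Qed.

Lemma main_h :
  (cvg (E_head q h t @[t --> +oo]) /\
     lim (E_head q h t @[t --> +oo]) = ls / (ls + m%:R * le)) /\
  (forall S : {set 'I_k}, S != finset.set0 ->
     cvg (E_max q h S t @[t --> +oo]) /\
     lim (E_max q h S t @[t --> +oo]) =
       (lamc_set lc S * lim (E_head q h t @[t --> +oo])
        + \sum_(i in Nset lam h S) lam_to_set lam h i S
             * lim (E_max q h (i |: S) t @[t --> +oo]))
       / (le + lamc_set lc S + \sum_(i in Nset lam h S) lam_to_set lam h i S)).
Proof.
have HH : lim (E_head q h t @[t --> +oo]) = astar.
  rewrite E_head_eq; exact: cvg_lim (cvg_hd _).
split.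
  by rewrite HH; split => //; rewrite E_head_eq; exact: cvg_hd.
move=> S _; rewrite HH sumN0.
have -> : \sum_(i in Nset lam h S) lam_to_set lam h i S * lim (E_max q h (i |: S) t @[t --> +oo])
   = \sum_(i | i \notin S) lam_to_set lam h i S * lim (EE (Phi pg (i |: S)) t @[t --> +oo]).
  by rewrite sumN; apply: eq_bigr => i _; rewrite E_max_eq.
rewrite E_max_eq; split; first by apply: cvgP; exact: cvg_g.
apply: cvg_lim; first exact: norm_hausdorff.
exact (@cvg_g S).
Qed.

End Markov.


Unset Implicit Arguments.

Theorem theorem5 (R : realType) (m k : nat) (le ls lc : R)
    (lam : 'I_m -> 'I_k -> 'I_k -> R)
    (p : R -> state m k -> R) :
  0 < le -> 0 <= ls -> 0 <= lc ->
  (forall h i j, 0 <= lam h i j) ->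
  (* initial law: a probability distribution on the states *)
  (forall x, 0 <= p 0 x) -> \sum_x p 0 x = 1 ->
  (* p t is the law at time t: Kolmogorov forward equation *)
  (forall (t : R) (y : state m k), is_derive t (1 : R) (fun s => p s y) (generator le ls lc lam (p t) y)) ->
  (forall h : 'I_m,
     cvg (E_head p h t @[t --> +oo]) /\
     lim (E_head p h t @[t --> +oo]) = ls / (ls + m%:R * le)) /\
  (forall (h : 'I_m) (S : {set 'I_k}), S != finset.set0 ->
     cvg (E_max p h S t @[t --> +oo]) /\
     lim (E_max p h S t @[t --> +oo]) =
       (lamc_set lc S * lim (E_head p h t @[t --> +oo])
        + \sum_(i in Nset lam h S) lam_to_set lam h i S
             * lim (E_max p h (i |: S) t @[t --> +oo]))
       / (le + lamc_set lc S + \sum_(i in Nset lam h S) lam_to_set lam h i S)).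
Proof.
move=> Hle Hls Hlc Hlam Hpos H0 Hp.
split.
  by move=> h; exact: (proj1 (main_h h Hp H0 Hle Hls Hlc Hlam)).
by move=> h S Sn0; exact: (proj2 (main_h h Hp H0 Hle Hls Hlc Hlam) S Sn0).
Qed.
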